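(* Let $Y$ be a real Banach space and $X$ a closed linear subspace of $Y$, and let $q\colon Y^*\to X^*$ be the restriction map $q(y^* )=y^*|_X$. Put $\mathcal{HB}(S_{X^*}):=\{y^*\in Y^*:\ \|y^*\|=1,\ \|q(y^* )\|=1\}$. Then $X$ has property U in $Y$ if and only if the restriction $q|_{\mathcal{HB}(S_{X^*})}\colon \mathcal{HB}(S_{X^*})\to S_{X^*}$ (which is always onto) is one-to-one. Moreover, if this is the case, then $q|_{\mathcal{HB}(S_{X^*})}$ is a homeomorphism from $\mathcal{HB}(S_{X^*})$ onto $S_{X^*}$, both endowed with the relative weak$^*$ topologies.
   Context: A closed subspace $X$ of a Banach space $Y$ has property U in $Y$ if every $x^*\in X^*$ has a unique Hahn–Banach (norm-preserving) extension to $Y$, i.e. for every $x^*\in X^*$ there is exactly one $y^*\in Y^*$ with $y^*|_X=x^*$ and $\|y^*\|=\|x^*\|$. $S_Z$ denotes the unit sphere of a Banach space $Z$. *)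

(* Defs.v *)
From HB Require Import structures.
From mathcomp Require Import all_boot all_order all_algebra.
From mathcomp Require Import all_classical all_reals all_analysis.
Set Implicit Arguments. Unset Strict Implicit. Unset Printing Implicit Defensive.
Import Order.TTheory GRing.Theory Num.Theory.
Import numFieldNormedType.Exports.
Local Open Scope classical_set_scope.
Local Open Scope ring_scope.

Section Duality.
Variables (R : realType) (Y : normedModType R).

Definition is_linear_subspace (X : set Y) : Prop :=
  X 0 /\ (forall (a : R) (x y : Y), X x -> X y -> X (a *: x + y)).

Definition in_dualY (f : Y -> R) : Prop :=
  (forall (a : R) (x y : Y), f (a *: x + y) = a * f x + f y) /\ continuous f.

(* Elements of X^* : continuous linear functionals on X, represented
   canonically as functions Y -> R vanishing off X. *)
Definition in_dualX (X : set Y) (g : Y -> R) : Prop :=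
  [/\ (forall (a : R) (x y : Y), X x -> X y -> g (a *: x + y) = a * g x + g y),
      ({within X, continuous g})
    & (forall y, ~ X y -> g y = 0)].

(* dual norm of a functional on the subspace A (A = setT gives the norm of Y^* ) *)
Definition dnorm (A : set Y) (f : Y -> R) : R :=
  sup [set `|f x| | x in [set x | A x /\ `|x| <= 1]].

Definition restr (X : set Y) (f : Y -> R) : Y -> R :=
  fun y => if `[< X y >] then f y else 0.

Definition propU (X : set Y) : Prop :=
  forall g, in_dualX X g ->
    exists! f, [/\ in_dualY f, restr X f = g & dnorm setT f = dnorm X g].

Definition HBset (X : set Y) : set (Y -> R) :=
  [set f | [/\ in_dualY f, dnorm setT f = 1 & dnorm X (restr X f) = 1]].

Definition SXdual (X : set Y) : set (Y -> R) :=
  [set g | in_dualX X g /\ dnorm X g = 1].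

(* relative weak* continuity: continuity for the topology of pointwise
   convergence, relative to the subset A *)
Definition wstar_cont_on (A : set (Y -> R)) (F : (Y -> R) -> (Y -> R)) : Prop :=
  {within (A : set {ptws Y -> R}),
     continuous (F : {ptws Y -> R} -> {ptws Y -> R})}.

Definition wstar_homeo (A B : set (Y -> R)) (F : (Y -> R) -> (Y -> R)) : Prop :=
  [/\ set_bij A B F, wstar_cont_on A F &
      exists G : (Y -> R) -> (Y -> R),
        [/\ forall g, B g -> A (G g) /\ F (G g) = g,
            forall f, A f -> G (F f) = f
          & wstar_cont_on B G]].

End Duality.

(* Main.v *)
Require Import Defs.
From HB Require Import structures.
From mathcomp Require Import all_boot all_order all_algebra.
From mathcomp Require Import all_classical all_reals all_analysis.
From mathcomp Require Import ring lra.
Set Implicit Arguments. Unset Strict Implicit. Unset Printing Implicit Defensive.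
Import Order.TTheory GRing.Theory Num.Theory.
Import numFieldNormedType.Exports.
Local Open Scope classical_set_scope.
Local Open Scope ring_scope.

Section HBsec.
Variables (R : realType) (Y : normedModType R).

Definition Pg (G : set (Y * R)) : Prop :=
  [/\ G (0, 0), (forall x a b, G (x, a) -> G (x, b) -> a = b),
      (forall (k : R) x y a b, G (x, a) -> G (y, b) -> G (k *: x + y, k * a + b))
    & (forall x a, G (x, a) -> a <= `|x|)].

Definition ext (M : set (Y * R)) (y : Y) (c : R) : set (Y * R) :=
  [set p | exists x a t, M (x, a) /\ p = (x + t *: y, a + t * c)].

Lemma Pg_scale M k x a : Pg M -> M (x, a) -> M (k *: x, k * a).
Proof.
case=> M0 _ Mc _ Mxa.
by have := Mc k x 0 a 0 Mxa M0; rewrite addr0 addr0.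
Qed.

Lemma Pg_ext M y c : Pg M -> ~ (exists a, M (y, a)) ->
  (forall x a, M (x, a) -> a + c <= `|x + y|) ->
  (forall x a, M (x, a) -> a - c <= `|x - y|) ->
  Pg (ext M y c).
Proof.
move=> PM Ny H1 H2; have [M0 Mf Mc Md] := PM.
split.
- by exists 0, 0, 0; split => //; rewrite scale0r mul0r !addr0.
- move=> x a b [x1 [a1 [t1 [M1 [-> ->]]]]] [x2 [a2 [t2 [M2 []]]]].
  move=> E1 E2.
  have [tt|tnt] := eqVneq t1 t2.
    subst t2; have ex : x1 = x2.
      exact: (addIr (t1 *: y) E1).
    subst x2; rewrite (Mf _ _ _ M1 M2); by [].
  exfalso; apply: Ny.
  have Md' := Mc (-1) x1 x2 a1 a2 M1 M2.
  have := Pg_scale ((t1 - t2)^-1) PM Md'.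
  set v := _ *: _; have -> : v = y.
    rewrite /v scaleN1r.
    have -> : - x1 + x2 = (t1 - t2) *: y.
      have -> : x2 = x1 + t1 *: y - t2 *: y by rewrite E1 addrK.
      by rewrite scalerBl addrA addKr.
    by rewrite scalerA mulVf ?scale1r // subr_eq0.
  by move=> Hy; eexists; exact Hy.
- move=> k p q a b [x1 [a1 [t1 [M1 [-> ->]]]]] [x2 [a2 [t2 [M2 [-> ->]]]]].
  exists (k *: x1 + x2), (k * a1 + a2), (k * t1 + t2); split; first exact: Mc.
  congr pair.
    by rewrite scalerDr scalerA scalerDl; rewrite !addrA; congr (_ + _); rewrite -!addrA; congr (_ + _); rewrite addrC.
  by rewrite mulrDl mulrDr mulrA; lra.
- move=> p a [x1 [a1 [t [M1 [-> ->]]]]].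
  have [t0|tn0|->] := ltgtP t 0; last by rewrite scale0r mul0r !addr0; exact: Md.
  + have s0 : 0 < - t by rewrite oppr_gt0.
    have := H2 _ _ (Pg_scale ((- t)^-1) PM M1).
    move=> h; have := ler_wpM2l (ltW s0) h.
    rewrite mulrBr mulrA mulfV ?gt_eqF // mul1r.
    have -> : ((- t)^-1 *: x1 - y) = (- t)^-1 *: (x1 + t *: y).
      by rewrite scalerDr scalerA invrN mulNr mulVf ?lt_eqF // scaleN1r.
    rewrite normrZ mulrA ger0_norm ?invr_ge0 ?(ltW s0) // mulfV ?gt_eqF // mul1r.
    by move=> h'; lra.
  + have := H1 _ _ (Pg_scale (t^-1) PM M1).
    move=> h; have := ler_wpM2l (ltW tn0) h.
    rewrite mulrDr mulrA mulfV ?gt_eqF // mul1r.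
    have -> : (t^-1 *: x1 + y) = t^-1 *: (x1 + t *: y).
      by rewrite scalerDr scalerA mulVf ?gt_eqF // scale1r.
    rewrite normrZ mulrA ger0_norm ?invr_ge0 ?(ltW tn0) // mulfV ?gt_eqF // mul1r.
    by [].
Qed.


Lemma hahn_banach G0 : Pg G0 -> exists f : Y -> R,
  [/\ (forall (k : R) x y, f (k *: x + y) = k * f x + f y),
      (forall x, `|f x| <= `|x|) & (forall x a, G0 (x, a) -> f x = a)].
Proof.
move=> PG0; pose Q := fun G => Pg (G `|` G0).
have [A [QA Amax]] : exists A, Q A /\ (forall B, A `<` B -> ~ Q B).
  apply: Zorn_bigcup.
  move=> F FQ Ftot; rewrite /Q.
  set U := \bigcup_(X in F) X.
  have key : forall p q, (U `|` G0) p -> (U `|` G0) q ->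
      exists H, [/\ Pg H, H `<=` U `|` G0, H p & H q].
    move=> p q [[G1 FG1 G1p]|G0p] [[G2 FG2 G2q]|G0q].
    - have [s12|s21] := Ftot _ _ FG1 FG2.
      + exists (G2 `|` G0); split; [exact: FQ| |left; exact: s12|by left].
        by move=> z [z2|z0]; [left; exists G2|right].
      + exists (G1 `|` G0); split; [exact: FQ| |by left|left; exact: s21].
        by move=> z [z2|z0]; [left; exists G1|right].
    - exists (G1 `|` G0); split; [exact: FQ| |by left|by right].
      by move=> z [z2|z0]; [left; exists G1|right].
    - exists (G2 `|` G0); split; [exact: FQ| |by right|by left].
      by move=> z [z2|z0]; [left; exists G2|right].
    - exists G0; split => //; by move=> z z0; right.
  have [G00 _ _ _] := PG0.
  split.
  - by right.
  - move=> x a b pa pb; have [H [[_ Hf _ _] _ Ha Hb]] := key _ _ pa pb; exact: Hf Ha Hb.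
  - move=> k x y a b pa pb; have [H [[_ _ Hc _] HU Ha Hb]] := key _ _ pa pb.
    exact/HU/Hc.
  - move=> x a pa; have [H [[_ _ _ Hd] _ Ha _]] := key _ _ pa pa; exact: Hd.
pose M := A `|` G0.
have PM : Pg M := QA.
have [M0 Mf Mc Md] := PM.
have tot : forall y, exists a, M (y, a).
  move=> y; case: (pselect (exists a, M (y, a))) => // Ny; exfalso.
  pose L := [set r | exists x a, M (x, a) /\ r = a - `|x - y|].
  have ubL : forall x2 a2, M (x2, a2) -> ubound L (`|x2 + y| - a2).
    move=> x2 a2 M2 r [x1 [a1 [M1 ->]]].
    have := Md _ _ (Mc 1 x1 x2 a1 a2 M1 M2); rewrite scale1r mul1r => h.
    have : `|x1 + x2| <= `|x1 - y| + `|x2 + y|.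
      have -> : x1 + x2 = (x1 - y) + (x2 + y) by rewrite addrACA addNr addr0.
      exact: ler_normD.
    lra.
  have hasL : has_sup L.
    split; first by exists (0 - `|0 - y|), 0, 0.
    by exists (`|0 + y| - 0); apply: ubL.
  pose c := sup L.
  have H2 : forall x a, M (x, a) -> a - c <= `|x - y|.
    move=> x a Mxa; have : a - `|x - y| <= c.
      by apply: sup_upper_bound => //; exists x, a.
    lra.
  have H1 : forall x a, M (x, a) -> a + c <= `|x + y|.
    move=> x a Mxa; have : c <= `|x + y| - a.
      by apply: ge_sup; [case: hasL|exact: ubL].
    lra.
  have PE := Pg_ext PM Ny H1 H2.
  have ME : M `<=` ext M y c.
    by case=> x a Mxa; exists x, a, 0; rewrite scale0r mul0r !addr0.
  apply: (Amax (ext M y c)).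
    split; first by move=> p Ap; apply: ME; left.
    move=> sub; apply: Ny; exists c.
    have : ext M y c (y, c) by exists 0, 0, 1; rewrite add0r scale1r mul1r add0r.
    by move/sub => Ay; left.
  rewrite /Q setUidl //; by move=> p G0p; apply: ME; right.
have [f Hf] := choice tot.
exists f; split.
- move=> k x y; apply: (Mf (k *: x + y)); first exact: Hf.
  exact: Mc.
- move=> x; rewrite ler_norml; apply/andP; split; last exact: Md.
  have := Md _ _ (Pg_scale (-1) PM (Hf x)).
  rewrite scaleN1r normrN; lra.
- by move=> x a G0xa; apply: Mf (Hf x) _; right.
Qed.

End HBsec.

Section Basic.
Variables (R : realType) (Y : normedModType R).

Definition islin (f : Y -> R) := forall (k : R) x y, f (k *: x + y) = k * f x + f y.

Lemma islin0 f : islin f -> f 0 = 0.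
Proof. by move=> lf; have := lf 1 0 0; rewrite scale1r addr0 mul1r => h; lra. Qed.

Lemma islinZ f k x : islin f -> f (k *: x) = k * f x.
Proof. by move=> lf; have := lf k x 0; rewrite addr0 islin0 // addr0. Qed.

Lemma islinB f x y : islin f -> f (x - y) = f x - f y.
Proof. by move=> lf; have := lf (-1) y x; rewrite scaleN1r mulN1r addrC => ->; rewrite addrC. Qed.

Lemma lin_cont (f : Y -> R) C : islin f -> (forall x, `|f x| <= C * `|x|) -> continuous f.
Proof.
move=> lf fb x; apply/cvgrPdist_lt => e e0.
have C1 : 0 < `|C| + 1 by rewrite ltr_wpDl.
have e'0 : 0 < e / (`|C| + 1) by rewrite divr_gt0.
have : \forall z \near x, `|x - z| < e / (`|C| + 1) by exact: cvgr_dist_lt.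
apply: filterS => z hz.
rewrite -islinB //; apply: (le_lt_trans (fb _)).
apply: (le_lt_trans (y := `|C| * `|x - z|)); first by apply: ler_wpM2r => //; exact: ler_norm.
rewrite ltr_pdivlMr // in hz.
have : `|C| * `|x - z| <= `|x - z| * (`|C| + 1).
  by rewrite mulrDr mulr1 mulrC lerDl.
lra.
Qed.

Lemma small_bounded (A : set Y) (f : Y -> R) d : 0 < d ->
  (forall k x, A x -> A (k *: x)) ->
  (forall k x, A x -> f (k *: x) = k * f x) ->
  (forall z, A z -> `|z| < d -> `|f z| < 1) ->
  forall x, A x -> `|f x| <= (2 / d) * `|x|.
Proof.
move=> d0 hA hf sm x Ax.
have f0 : f 0 = 0 by have := hf 0 x Ax; rewrite scale0r mul0r.
have [->|xn0] := eqVneq x 0; first by rewrite f0 !normr0 mulr0.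
have nx : 0 < `|x| by rewrite normr_gt0.
pose k := d / (2 * `|x|).
have k0 : 0 < k by rewrite divr_gt0 // mulr_gt0.
have kx : `|k *: x| < d.
  rewrite normrZ (gtr0_norm k0) /k.
  have -> : d / (2 * `|x|) * `|x| = d / 2 by field; rewrite gt_eqF.
  lra.
have := sm (k *: x) (hA k x Ax) kx.
rewrite hf // normrM (gtr0_norm k0) => h.
rewrite -(ler_pM2l k0).
have -> : k * (2 / d * `|x|) = 1.
  rewrite /k; field; apply/andP; split; rewrite gt_eqF //.
exact: ltW.
Qed.

Lemma dnorm_ub (A : set Y) (f : Y -> R) C : A 0 ->
  (forall x, A x -> `|x| <= 1 -> `|f x| <= C) -> dnorm A f <= C.
Proof.
move=> A0 hb; apply: ge_sup.
  by exists `|f 0|, 0 => //; split => //; rewrite normr0.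
by move=> _ [x [Ax x1] <-]; exact: hb.
Qed.

Lemma dnorm_lb (A : set Y) (f : Y -> R) C x :
  (forall x, A x -> `|x| <= 1 -> `|f x| <= C) ->
  A x -> `|x| <= 1 -> `|f x| <= dnorm A f.
Proof.
move=> hb Ax x1; apply: sup_upper_bound; last by exists x.
split; first by exists `|f x|, x.
by exists C => _ [z [Az z1] <-]; exact: hb.
Qed.

Lemma dnorm_bound (A : set Y) (f : Y -> R) C : 
  (forall k x, A x -> A (k *: x)) ->
  (forall k x, A x -> f (k *: x) = k * f x) ->
  (forall x, A x -> `|f x| <= C * `|x|) ->
  forall x, A x -> `|f x| <= dnorm A f * `|x|.
Proof.
move=> hA hf hb x Ax.
have hb1 : forall x, A x -> `|x| <= 1 -> `|f x| <= `|C|.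
  move=> z Az z1; apply: (le_trans (hb z Az)).
  apply: (le_trans (y := `|C| * `|z|)); first by apply: ler_wpM2r => //; exact: ler_norm.
  by rewrite -[X in _ <= X]mulr1; apply: ler_wpM2l.
have f0 : f 0 = 0 by have := hf 0 x Ax; rewrite scale0r mul0r.
have [->|xn0] := eqVneq x 0; first by rewrite f0 !normr0 mulr0.
have nx : 0 < `|x| by rewrite normr_gt0.
have := dnorm_lb hb1 (hA (`|x|^-1) x Ax) _.
rewrite normrZ hf // normrM ger0_norm ?invr_ge0 ?(ltW nx) // mulVf ?gt_eqF //.
move=> /(_ (lexx _)) h.
have inx : 0 < `|x|^-1 by rewrite invr_gt0.
rewrite -(ler_pM2l inx).
have -> : `|x|^-1 * (dnorm A f * `|x|) = dnorm A f by field; rewrite gt_eqF.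
exact: h.
Qed.

Lemma dnorm_ge0 (A : set Y) (f : Y -> R) C : A 0 ->
  (forall x, A x -> `|x| <= 1 -> `|f x| <= C) -> 0 <= dnorm A f.
Proof.
move=> A0 hb; apply: le_trans (dnorm_lb hb A0 _) => //; by rewrite normr0.
Qed.

Lemma dnorm_scale (A : set Y) (f : Y -> R) C k : A 0 -> 0 < k ->
  (forall x, A x -> `|x| <= 1 -> `|f x| <= C) ->
  dnorm A (fun y => k * f y) = k * dnorm A f.
Proof.
move=> A0 k0 hb; apply/eqP; rewrite eq_le; apply/andP; split.
  apply: dnorm_ub => // x Ax x1; rewrite normrM gtr0_norm //.
  by rewrite ler_pM2l //; exact: dnorm_lb hb Ax x1.
have hb' : forall x, A x -> `|x| <= 1 -> `|k * f x| <= k * C.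
  by move=> x Ax x1; rewrite normrM gtr0_norm // ler_pM2l //; exact: hb.
rewrite -ler_pdivlMl //; apply: dnorm_ub => // x Ax x1.
rewrite ler_pdivlMl // -[X in X * _](gtr0_norm k0) -normrM.
exact: (dnorm_lb hb' Ax x1).
Qed.

Lemma islinN f x : islin f -> f (- x) = - f x.
Proof. by move=> lf; have := islinB 0 x lf; rewrite sub0r islin0 // sub0r. Qed.

End Basic.

Section Main.
Variables (R : realType) (Y : normedModType R) (X : set Y).
Hypothesis HX : is_linear_subspace X.

Lemma X0 : X 0. Proof. by case: HX. Qed.
Lemma Xc k x y : X x -> X y -> X (k *: x + y). Proof. by case: HX => _; apply. Qed.
Lemma XZ k x : X x -> X (k *: x).
Proof. by move=> Xx; have := Xc k Xx X0; rewrite addr0. Qed.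

Lemma ball_bound (A : set Y) (f : Y -> R) C :
  (forall x, A x -> `|f x| <= C * `|x|) -> forall x, A x -> `|x| <= 1 -> `|f x| <= `|C|.
Proof.
move=> hb z Az z1; apply: (le_trans (hb z Az)).
apply: (le_trans (y := `|C| * `|z|)); first by apply: ler_wpM2r => //; exact: ler_norm.
by rewrite -[X in _ <= X]mulr1; apply: ler_wpM2l.
Qed.

Lemma dualY_bound (f : Y -> R) : in_dualY f -> exists C, forall x, `|f x| <= C * `|x|.
Proof.
move=> [lf cf].
have := (cvgrPdist_lt _ _).1 (cf 0) 1 ltr01.
move=> h; have [d /= d0 hd] := nbhs_norm0P.1 (h _).
exists (2 / d) => x; apply: (@small_bounded _ _ setT f d) => //.
- by move=> k z _ ; rewrite (islinZ _ _ lf).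
- move=> z _ zd; have := hd z zd; by rewrite /= (islin0 lf) sub0r normrN.
Qed.

Lemma dualX_bound (g : Y -> R) : in_dualX X g -> exists C, forall x, X x -> `|g x| <= C * `|x|.
Proof.
move=> [lg cg _].
have g0 : g 0 = 0.
  have := lg 1 0 0 X0 X0; rewrite scale1r addr0 mul1r => h; lra.
have hg : forall k x, X x -> g (k *: x) = k * g x.
  by move=> k x Xx; have := lg k x 0 Xx X0; rewrite addr0 g0 addr0.
have := (subspace_continuousP _ _).1 cg 0 X0.
move=> h; have := (cvgrPdist_lt _ _).1 h 1 ltr01.
move=> h'; have [d /= d0 hd] := nbhs_norm0P.1 (h' _).
exists (2 / d); apply: small_bounded => //.
- by move=> k z Xz; exact: XZ.
- move=> z Xz zd; have := hd z zd Xz; rewrite /=. by rewrite /from_subspace /= g0 sub0r normrN.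
Qed.

Lemma HB_norm (f : Y -> R) : HBset X f -> forall x, `|f x| <= `|x|.
Proof.
move=> [df n1 _] x; have [C hC] := dualY_bound df.
have := @dnorm_bound _ _ setT f C (fun _ _ _ => I) (fun k x _ => islinZ k x df.1) (fun x _ => hC x) x I.
by rewrite n1 mul1r.
Qed.

Lemma restr_mono (f : Y -> R) : in_dualY f -> dnorm X (restr X f) <= dnorm setT f.
Proof.
move=> df; have [C hC] := dualY_bound df.
apply: dnorm_ub; first exact: X0.
move=> x Xx x1; rewrite /restr asboolT //.
exact: (dnorm_lb (ball_bound (A := setT) (fun x _ => hC x))).
Qed.

Lemma restrE (f : Y -> R) x : X x -> restr X f x = f x.
Proof. by move=> Xx; rewrite /restr asboolT. Qed.
Lemma restrN (f : Y -> R) x : ~ X x -> restr X f x = 0.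
Proof. by move=> Xx; rewrite /restr asboolF. Qed.

Lemma P1 (f : Y -> R) : HBset X f -> SXdual X (restr X f).
Proof.
move=> [[lf cf] n1 n2]; split => //; split.
- move=> a x y Xx Xy; rewrite restrE; last exact: Xc.
  by rewrite !restrE //; exact: lf.
- apply: (@subspace_eq_continuous _ _ _ f); last exact: continuous_subspaceT.
  by move=> x; rewrite inE => Xx; rewrite /from_subspace /= restrE.
- by move=> y; exact: restrN.
Qed.

Lemma P2 (g : Y -> R) : SXdual X g -> exists2 f, HBset X f & restr X f = g.
Proof.
move=> [dg n1]; have [C hC] := dualX_bound dg.
have [lg cg goff] := dg.
have g0 : g 0 = 0.
  have := lg 1 0 0 X0 X0; rewrite scale1r addr0 mul1r => h; lra.
have hg : forall k x, X x -> g (k *: x) = k * g x.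
  by move=> k x Xx; have := lg k x 0 Xx X0; rewrite addr0 g0 addr0.
have gb : forall x, X x -> `|g x| <= `|x|.
  move=> x Xx; have := dnorm_bound (fun k x Xx => XZ k Xx) hg hC Xx.
  by rewrite n1 mul1r.
pose G0 := [set p : Y * R | X p.1 /\ p.2 = g p.1].
have PG0 : Pg G0.
  split.
  - by split; [exact: X0|rewrite g0].
  - by move=> x a b [_ /= ->] [_ /= ->].
  - move=> k x y a b [Xx /= ->] [Xy /= ->]; split; [exact: Xc|by rewrite /= lg].
  - by move=> x a [Xx /= ->]; apply: le_trans (gb _ Xx); exact: ler_norm.
have [f [lf fb fG]] := hahn_banach PG0.
have fX : forall x, X x -> f x = g x by move=> x Xx; apply: fG.
have df : in_dualY f.
  split => //; apply: (@lin_cont _ _ f 1) => // x; rewrite mul1r; exact: fb.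
have rf : restr X f = g.
  apply/funext => y; case: (pselect (X y)) => Xy.
    by rewrite restrE // fX.
  by rewrite restrN // goff.
exists f => //; split => //; last by rewrite rf.
apply/eqP; rewrite eq_le; apply/andP; split.
  apply: dnorm_ub => // x _ x1; exact: le_trans (fb x) x1.
by rewrite -n1 -rf; exact: restr_mono.
Qed.

Definition injHB := forall f1 f2, HBset X f1 -> HBset X f2 ->
  restr X f1 = restr X f2 -> f1 = f2.

Lemma U_inj : propU X -> injHB.
Proof.
move=> U f1 f2 H1 H2 r12.
have [dg _] := P1 H1.
have [f [Pf uf]] := U _ dg.
have [d1 n11 n12] := H1; have [d2 n21 n22] := H2.
rewrite -(uf f1); last by split => //; rewrite n11 n12.
apply: uf; split => //; by rewrite ?n21 ?n12 ?r12.
Qed.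

Lemma restr_scale (f : Y -> R) k :
  restr X (fun y => k * f y) = (fun y => k * restr X f y).
Proof. by apply/funext => y; rewrite /restr; case: ifP => _ //; rewrite mulr0. Qed.

Lemma inj_U : injHB -> propU X.
Proof.
move=> inj g dg; have [C hC] := dualX_bound dg.
have [lg cg goff] := dg.
have g0 : g 0 = 0.
  have := lg 1 0 0 X0 X0; rewrite scale1r addr0 mul1r => h; lra.
have hg : forall k x, X x -> g (k *: x) = k * g x.
  by move=> k x Xx; have := lg k x 0 Xx X0; rewrite addr0 g0 addr0.
set c := dnorm X g.
have gb : forall x, X x -> `|g x| <= c * `|x|.
  by move=> x Xx; exact: (dnorm_bound (fun k x Xx => XZ k Xx) hg hC Xx).
have c0 : 0 <= c by exact: (dnorm_ge0 X0 (ball_bound hC)).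
pose P f := [/\ in_dualY f, restr X f = g & dnorm setT f = c].
suff [[f Pf] uP] : (exists f, P f) /\ (forall f1 f2, P f1 -> P f2 -> f1 = f2).
  by exists f; split => // f' Pf'; exact: uP.
have Pbound : forall f, P f -> forall x, `|f x| <= c * `|x|.
  move=> f [df _ nf] x; have [C' hC'] := dualY_bound df.
  rewrite -nf; exact: (@dnorm_bound _ _ setT f C' (fun _ _ _ => I)
    (fun k x _ => islinZ k x df.1) (fun x _ => hC' x) x I).
have [cz|cpos] := eqVneq c 0.
  have gz : forall y, g y = 0.
    move=> y; case: (pselect (X y)) => Xy; last exact: goff.
    by apply/eqP; rewrite -normr_le0; apply: le_trans (gb _ Xy) _; rewrite cz mul0r.
  split.
    exists (fun _ => 0); split.
    - by split; [move=> *; rewrite mulr0 addr0|exact: cst_continuous].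
    - by apply/funext => y; rewrite /restr gz; case: ifP.
    - apply/eqP; rewrite eq_le; apply/andP; split.
        by rewrite cz; apply: dnorm_ub => // x _ _; rewrite normr0.
      by rewrite cz; apply: (@dnorm_ge0 _ _ _ _ 0) => // x _ _; rewrite normr0.
  move=> f1 f2 P1 P2; apply/funext => y.
  have := Pbound _ P1 y; have := Pbound _ P2 y; rewrite cz mul0r !normr_le0.
  by move=> /eqP -> /eqP ->.
have cp : 0 < c by rewrite lt_neqAle eq_sym cpos c0.
pose g' := fun y => c^-1 * g y.
have dg' : in_dualX X g'.
  split.
  - by move=> a x y Xx Xy; rewrite /g' lg // mulrDr mulrCA.
  - move=> x; apply: (@continuousM _ (subspace X) (fun=> c^-1) (from_subspace X g)); [exact: cst_continuous|exact: cg].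
  - by move=> y Xy; rewrite /g' goff // mulr0.
have ng' : dnorm X g' = 1.
  have icp : 0 < c^-1 by rewrite invr_gt0.
  rewrite /g' (dnorm_scale X0 icp (ball_bound hC)).
  by rewrite mulVf // gt_eqF.
split.
  have [f' Hf' rf'] := P2 (conj dg' ng').
  have [[lf' cf'] nf' _] := Hf'.
  have f'b := HB_norm Hf'.
  exists (fun y => c * f' y); split.
  - split; first by move=> k x y; rewrite lf' mulrDr mulrCA.
    apply: (@lin_cont _ _ _ c); first by move=> k x y; rewrite lf' mulrDr mulrCA.
    by move=> x; rewrite normrM gtr0_norm // ler_pM2l.
  - by rewrite restr_scale rf' /g'; apply/funext => y; rewrite mulrA mulfV ?gt_eqF // mul1r.
  - rewrite (@dnorm_scale _ _ _ _ 1) // ?nf' ?mulr1 // => x _ x1.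
    exact: le_trans (f'b x) x1.
move=> f1 f2 Pf1 Pf2.
have toHB : forall f, P f -> HBset X (fun y => c^-1 * f y) /\ restr X (fun y => c^-1 * f y) = g'.
  move=> f Pf; have [[lf cf] rf nf] := Pf; have fb := Pbound _ Pf.
  have rh : restr X (fun y => c^-1 * f y) = g' by rewrite restr_scale rf.
  split => //; split.
  - split; first by move=> k x y; rewrite lf mulrDr mulrCA.
    apply: (@lin_cont _ _ _ (c^-1 * c)); first by move=> k x y; rewrite lf mulrDr mulrCA.
    move=> x; rewrite normrM gtr0_norm ?invr_gt0 // -mulrA ler_pM2l ?invr_gt0 //.
  - rewrite (@dnorm_scale _ _ _ _ c) //; first by rewrite nf mulVf // gt_eqF.
      by rewrite invr_gt0.
    move=> x _ x1; apply: le_trans (fb x) _.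
    by rewrite -[X in _ <= X]mulr1 ler_wpM2l.
  - by rewrite rh.
have [H1 r1] := toHB _ Pf1; have [H2 r2] := toHB _ Pf2.
have E := inj _ _ H1 H2 (etrans r1 (esym r2)).
apply/funext => y; have := congr1 (fun h => h y) E => /=.
by move/(mulfI (invr_neq0 cpos)).
Qed.

Lemma key (inj : injHB) (f0 : Y -> R) y e : HBset X f0 -> 0 < e ->
  exists2 x, X x & f0 x + `|y - x| < f0 y + e.
Proof.
move=> H0 e0; have [[lf0 cf0] n1 n2] := H0; have f0b := HB_norm H0.
case: (pselect (exists2 x, X x & f0 x + `|y - x| < f0 y + e)) => // Nx; exfalso.
have ge : forall x, X x -> f0 y + e <= f0 x + `|y - x|.
  by move=> x Xx; rewrite leNgt; apply/negP => h; apply: Nx; exists x.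
have Ny : ~ X y.
  by move=> Xy; have := ge y Xy; rewrite subrr normr0 addr0; lra.
pose c := f0 y + e.
pose M := [set p : Y * R | X p.1 /\ p.2 = f0 p.1].
have PM : Pg M.
  split.
  - by split; [exact: X0|rewrite /= (islin0 lf0)].
  - by move=> x a b [_ /= ->] [_ /= ->].
  - move=> k x z a b [Xx /= ->] [Xz /= ->]; split; [exact: Xc|by rewrite /= lf0].
  - by move=> x a [Xx /= ->]; apply: le_trans (f0b _); exact: ler_norm.
have NyM : ~ exists a, M (y, a) by move=> [a [Xy _]]; exact: Ny Xy.
have H1 : forall x a, M (x, a) -> a + c <= `|x + y|.
  move=> x a [Xx /= ->]; have := ge _ (XZ (-1) Xx).
  rewrite (islinZ _ _ lf0) scaleN1r opprK [y + x]addrC /c; lra.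
have H2 : forall x a, M (x, a) -> a - c <= `|x - y|.
  move=> x a [Xx /= ->]; have := f0b (x - y); rewrite (islinB _ _ lf0) => h.
  have := ler_norm (f0 x - f0 y); rewrite /c; lra.
have PE := Pg_ext PM NyM H1 H2.
have [f1 [lf1 fb1 fG1]] := hahn_banach PE.
have f1y : f1 y = c.
  apply: fG1; exists 0, 0, 1; split; first by split; [exact: X0|rewrite /= (islin0 lf0)].
  by rewrite add0r scale1r mul1r add0r.
have f1X : forall x, X x -> f1 x = f0 x.
  move=> x Xx; apply: fG1; exists x, (f0 x), 0; split => //.
  by rewrite scale0r mul0r !addr0.
have rq : restr X f1 = restr X f0.
  apply/funext => z; rewrite /restr; case: ifP => // /asboolP Xz; exact: f1X.
have df1 : in_dualY f1.
  split => //; apply: (@lin_cont _ _ f1 1) => // x; rewrite mul1r; exact: fb1.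
have Hf1 : HBset X f1.
  split => //; last by rewrite rq.
  apply/eqP; rewrite eq_le; apply/andP; split.
    by apply: dnorm_ub => // x _ x1; exact: le_trans (fb1 x) x1.
  by rewrite -n2 -rq; exact: restr_mono.
have := inj _ _ Hf1 H0 rq => E.
by move: f1y; rewrite E /c => h; lra.
Qed.

Lemma key2 (inj : injHB) (f0 : Y -> R) y e : HBset X f0 -> 0 < e ->
  exists2 x, X x & f0 y - e < f0 x - `|y - x|.
Proof.
move=> H0 e0; have [x Xx h] := key inj (- y) H0 e0.
have [[lf0 _] _ _] := H0.
exists (- x); first by rewrite -scaleN1r; exact: XZ.
move: h; rewrite !(islinN _ lf0) opprK.
have -> : `|- y - x| = `|y + x| by rewrite -opprD normrN.
lra.
Qed.

Lemma restr_ptws (f0 : {ptws Y -> R}) y :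
  (fun g : {ptws Y -> R} => restr X g y) @ nbhs f0 --> restr X f0 y.
Proof.
case: (pselect (X y)) => Xy.
  have E : (fun g : {ptws Y -> R} => restr X g y) = proj y.
    by apply/funext => g; rewrite restrE.
  rewrite E restrE //; exact: (@proj_continuous Y (fun _ => R) y f0).
have E : (fun g : {ptws Y -> R} => restr X g y) = (fun _ => 0).
  by apply/funext => g; rewrite restrN.
rewrite E restrN //; exact: cvg_cst.
Qed.

Lemma G_cont (inj : injHB) (G : (Y -> R) -> (Y -> R)) :
  (forall g, SXdual X g -> HBset X (G g) /\ restr X (G g) = g) ->
  forall (g0 : {ptws Y -> R}) y, SXdual X g0 ->
  (fun g : {ptws Y -> R} => G g y) @ within (SXdual X) (nbhs g0) --> G g0 y.
Proof.
move=> HG g0 y Sg0; have [H0 r0] := HG _ Sg0.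
have FW : Filter (within (SXdual X) (nbhs g0)) by exact: (@within_filter _ (SXdual X) _ (nbhs_filter g0)).
apply/cvgrPdist_lt => e e0.
have e2 : 0 < e / 2 by rewrite divr_gt0.
have [x1 Xx1 h1] := key inj y H0 e2.
have [x2 Xx2 h2] := key2 inj y H0 e2.
have n1 : \forall g \near (g0 : {ptws Y -> R}), `|g0 x1 - g x1| < e / 2.
  exact: (@cvgr_dist_lt _ _ _ (nbhs g0) _ (fun g : {ptws Y -> R} => g x1) (g0 x1)
    (@proj_continuous Y (fun _ => R) x1 g0) _ e2).
have n2 : \forall g \near (g0 : {ptws Y -> R}), `|g0 x2 - g x2| < e / 2.
  exact: (@cvgr_dist_lt _ _ _ (nbhs g0) _ (fun g : {ptws Y -> R} => g x2) (g0 x2)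
    (@proj_continuous Y (fun _ => R) x2 g0) _ e2).
have gx1 : G g0 x1 = g0 x1 by have := congr1 (fun h => h x1) r0; rewrite /= restrE.
have gx2 : G g0 x2 = g0 x2 by have := congr1 (fun h => h x2) r0; rewrite /= restrE.
have [[lf0 _] _ _] := H0.
suff main : forall g : {ptws Y -> R}, `|g0 x1 - g x1| < e / 2 ->
    `|g0 x2 - g x2| < e / 2 -> SXdual X g -> `|G g0 y - G g y| < e.
  by rewrite near_withinE; exact: (filterS2 _ main n1 n2).
move=> g hg1 hg2 Bg.
have [Hg rg] := HG _ Bg.
have [[lg _] _ _] := Hg.
have gb := HB_norm Hg.
have ex1 : G g x1 = g x1 by have := congr1 (fun h => h x1) rg; rewrite /= restrE.
have ex2 : G g x2 = g x2 by have := congr1 (fun h => h x2) rg; rewrite /= restrE.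
have b1 := gb (y - x1); have b2 := gb (y - x2).
rewrite (islinB _ _ lg) in b1; rewrite (islinB _ _ lg) in b2.
rewrite gx1 in h1; rewrite gx2 in h2.
move: hg1 hg2 b1 b2; rewrite ex1 ex2 !ltr_norml !ler_norml.
move=> /andP[? ?] /andP[? ?] /andP[? ?] /andP[? ?].
apply/andP; split; lra.
Qed.

End Main.

Unset Implicit Arguments.
Set Strict Implicit.

Theorem proposition1p5 (R : realType) (Y : completeNormedModType R) (X : set Y)
  (HX : is_linear_subspace X) (cX : closed X) :
  [/\ (forall f, HBset X f -> SXdual X (restr X f)),
      (forall g, SXdual X g -> exists2 f, HBset X f & restr X f = g),
      (propU X <->
        (forall f1 f2, HBset X f1 -> HBset X f2 -> restr X f1 = restr X f2 -> f1 = f2))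
    & (propU X -> wstar_homeo (HBset X) (SXdual X) (restr X))].
Proof.
split.
- exact: P1.
- exact: P2.
- by split; [exact: U_inj|exact: inj_U].
move=> U; have inj := U_inj HX U.
have [G HG] : {G : (Y -> R) -> (Y -> R) & forall g, SXdual X g -> HBset X (G g) /\ restr X (G g) = g}.
  apply: (@choice _ _ (fun g f => SXdual X g -> HBset X f /\ restr X f = g)) => g.
  case: (pselect (SXdual X g)) => [Sg|nS].
    by have [f Hf rf] := P2 HX Sg; exists f.
  by exists g.
split.
- split.
  + by move=> f Hf; exact: P1.
  + by move=> f1 f2; rewrite !inE => H1 H2; exact: inj.
  + by move=> g Sg; have [f Hf rf] := P2 HX Sg; exists f.
- rewrite /wstar_cont_on; apply: continuous_subspaceT => f0.
  apply: (@pointwise_cvgP Y R (restr X @ nbhs f0) (restr X f0) _).2 => y.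
  exact: (@restr_ptws _ _ X f0 y).
exists G; split.
- by move=> g Sg; exact: HG g Sg.
- by move=> f Hf; have [H' r'] := HG _ (P1 HX Hf); exact: inj H' Hf r'.
rewrite /wstar_cont_on.
apply: (@subspace_continuousP {ptws Y -> R} (SXdual X) {ptws Y -> R} G).2 => g0 Sg0.
apply: (@pointwise_cvgP Y R (G @ within (SXdual X) (nbhs g0)) (G g0) _).2 => y.
exact: (@G_cont R Y X HX inj G HG g0 y Sg0).
Qed.
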